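(* Let $d_1,d_2$ be positive integers and $C>0$. Let $\sigma\in\{+1,-1\}^{2n}$ be a uniformly random labelling of $[2n]$ with exactly $n$ entries equal to $+1$. Let $T$ be a (fixed) tree whose vertices lie in $[2n]$ and which has at most $C\log n$ edges; for an edge $e=\{u,w\}$ of $T$ let $d_e=d_1$ if $\sigma_u=\sigma_w$ and $d_e=d_2$ otherwise. Then $$\mathbb{E}_{\sigma}\Big(\prod_{e\in T}\frac{d_e}{n}\Big)\le\Big(\frac{d_1+d_2}{2n}\Big)^{|T|}\Big(1+O\Big(\frac{(\log n)^2}{n}\Big)\Big),$$ where $|T|$ is the number of edges of $T$, $\mathbb{E}_\sigma$ is expectation over $\sigma$, and the implied constant depends only on $d_1,d_2,C$. *)

(* Defs.v *)
From HB Require Import structures.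
From mathcomp Require Import all_boot all_order all_algebra.
From mathcomp Require Import all_classical all_reals.
From mathcomp Require Import exp.
Set Implicit Arguments. Unset Strict Implicit. Unset Printing Implicit Defensive.
Import Order.TTheory GRing.Theory Num.Theory.
Local Open Scope ring_scope.

Section Defs.
Variable m : nat.

Definition adj (E : {set {set 'I_m}}) : rel 'I_m :=
  fun x y => [set x; y] \in E.

Definition verts (E : {set {set 'I_m}}) : {set 'I_m} := finset.cover E.

(* A tree whose vertices lie in [m], given by its edge set E:
   every edge has exactly two endpoints, the graph (verts E, E) is connected,
   and it is acyclic (every edge is a bridge: removing it disconnects
   its endpoints). *)
Definition is_tree (E : {set {set 'I_m}}) : Prop :=
  (forall e, e \in E -> #|e| = 2%N) /\
  (forall u v, u \in verts E -> v \in verts E -> connect (adj E) u v) /\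
  (forall u v, [set u; v] \in E -> u != v ->
       ~~ connect (adj (E :\ [set u; v])) u v).

(* labellings sigma : [m] -> {+1,-1}, encoded as booleans (true = +1) *)
Definition balanced (k : nat) : {set {ffun 'I_m -> bool}} :=
  [set s : {ffun 'I_m -> bool} | #|[set i | s i]| == k].

Definition d_edge (d1 d2 : nat) (s : {ffun 'I_m -> bool}) (e : {set 'I_m}) : nat :=
  if [forall u in e, forall w in e, s u == s w] then d1 else d2.

End Defs.

Definition tree_expect (R : realType) (d1 d2 n : nat)
    (E : {set {set 'I_(2 * n)}}) : R :=
  (#|balanced (2 * n) n|%:R)^-1 *
  \sum_(s in balanced (2 * n) n)
     \prod_(e in E) ((d_edge d1 d2 s e)%:R / n%:R).

(* Main.v *)
Require Import Defs.
From HB Require Import structures.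
From mathcomp Require Import all_boot all_order all_algebra all_fingroup.
From mathcomp Require Import all_classical all_reals.
From mathcomp Require Import exp.
From mathcomp Require Import ring lra.
Import Order.TTheory GRing.Theory Num.Theory.
Local Open Scope ring_scope.

Lemma half_eq (R : realFieldType) (X c q P : R) :
  X + X = c * (q * P) -> X = q * (c / 2 * P).
Proof.
move=> h; have -> : q * (c / 2 * P) = (c * (q * P)) / 2 by ring.
rewrite -h; lra.
Qed.

Lemma dbl (R : realFieldType) (X Y : R) : Y = X -> X + Y = 2 * X.
Proof. move=> ->; lra. Qed.

Lemma base_le (R : realFieldType) (b f q : R) : b * f * q * 1 <= b * 1 * (q * f).
Proof. rewrite le_eqVlt; apply/orP; left; apply/eqP; ring. Qed.

Lemma step_le (R : realFieldType) (a b q p r Bc M sF kk : R) :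
  0 <= q * p -> 0 <= kk -> r * a <= kk * b -> b * q * p <= Bc * M * (2 * sF) ->
  a * q * (p * r) <= Bc * (M * (kk + kk)) * sF.
Proof.
move=> qp0 kk0 SW IHG.
have h1 : (r * a) * (q * p) <= (kk * b) * (q * p) := ler_wpM2r qp0 SW.
have h2 : kk * (b * q * p) <= kk * (Bc * M * (2 * sF)) := ler_wpM2l kk0 IHG.
have -> : a * q * (p * r) = (r * a) * (q * p) by ring.
apply: (le_trans h1).
have -> : kk * b * (q * p) = kk * (b * q * p) by ring.
apply: (le_trans h2); rewrite le_eqVlt; apply/orP; left; apply/eqP; ring.
Qed.

Section Forest.
Variable R : realType.
Variable m : nat.
Implicit Types s : {ffun 'I_m -> bool}.

Lemma agree2 s (u v : 'I_m) : u != v ->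
  [forall a in [set u; v], forall b in [set u; v], s a == s b] = (s u == s v).
Proof.
move=> uv; apply/idP/idP.
  by move/forall_inP/(_ u (set21 u v))/forall_inP/(_ v (set22 u v)).
move=> /eqP h; apply/forall_inP => a; rewrite !inE => /orP[]/eqP->;
  apply/forall_inP => b; rewrite !inE => /orP[]/eqP-> //; by rewrite h.
Qed.

Lemma adj_sym (E : {set {set 'I_m}}) : symmetric (adj E).
Proof. by move=> x y; rewrite /adj finset.setUC. Qed.

Lemma forest_sum (d1 d2 n : nat) : forall E : {set {set 'I_m}},
 (forall e, e \in E -> #|e| = 2%N) ->
 (forall u v, [set u; v] \in E -> u != v -> ~~ connect (adj (E :\ [set u; v])) u v) ->
 \sum_(s : {ffun 'I_m -> bool}) \prod_(e in E) ((d_edge d1 d2 s e)%:R / n%:R : R)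
   = (2 ^ m)%:R * (((d1 + d2)%:R / n%:R) / 2) ^+ #|E|.
Proof.
move=> E; have [k] := ubnP #|E|; elim: k E => // k IH E; rewrite ltnS => hk h2 hf.
case: (set_0Vmem E) => [-> | [e eE]].
  rewrite cards0 expr0 mulr1; under eq_bigr do rewrite big_set0.
  by rewrite sumr_const card_ffun card_bool card_ord.
have /cards2P [u [v [uv ee]]] : #|e| == 2%N by rewrite h2.
set E' := E :\ e.
have hE' : (#|E'| < k)%N.
  by move: hk; rewrite (cardsD1 e E) eE add1n.
have h2' : forall f, f \in E' -> #|f| = 2%N.
  by move=> f; rewrite in_setD1 => /andP[_ /h2].
have hf' : forall a b, [set a; b] \in E' -> a != b ->
    ~~ connect (adj (E' :\ [set a; b])) a b.
  move=> a b; rewrite in_setD1 => /andP[_ abE] ab.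
  apply: contra (hf a b abE ab); apply: connect_sub => x y hxy.
  apply: connect1; move: hxy; rewrite /adj !in_setD1 => /andP[-> /andP[_ ->]].
  by [].
have IHE := IH E' hE' h2' hf'.
rewrite (cardsD1 e E) eE add1n exprS.
set w := fun s f => ((d_edge d1 d2 s f)%:R / n%:R : R).
set G := fun s => \prod_(f in E') w s f.
have hsplit : forall s, \prod_(f in E) w s f = w s e * G s.
  move=> s; rewrite (bigD1 e eE) /=; congr (_ * _); apply: eq_bigl => f; by rewrite in_setD1 andbC.
rewrite (eq_bigr (fun s => w s e * G s)); last by move=> s _; exact: hsplit.
set S := [set y | connect (adj E') v y].
have uS : u \notin S.
  rewrite inE; apply: contra (hf u v _ uv); last by rewrite -ee.
  rewrite -ee -/E' (sym_connect_sym (@adj_sym E')) => h; exact: h.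
have vS : v \in S by rewrite inE connect0.
pose phi s := [ffun i => if i \in S then ~~ s i else s i].
have phiK : involutive phi.
  by move=> s; apply/ffunP => i; rewrite !ffunE; case: (i \in S) => //; rewrite negbK.
have phiG : forall s, G (phi s) = G s.
  move=> s; apply: eq_bigr => f fE'; rewrite /w /d_edge.
  have /cards2P [a [b [ab fab]]] : #|f| == 2%N by rewrite h2'.
  rewrite fab in fE' *.
  have hab : (a \in S) = (b \in S).
    have adjab : adj E' a b := fE'.
    by rewrite !inE (same_connect1r (sym_connect_sym (@adj_sym E')) adjab).
  rewrite !agree2 // !ffunE hab; by case: (b \in S); case: (s a); case: (s b).
set c := (d1 + d2)%:R / n%:R : R.
have hphie : forall s, w s e + w (phi s) e = c.
  move=> s; rewrite /w /d_edge ee !agree2 // !ffunE (negbTE uS) vS.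
  by case: (s u); case: (s v) => /=; rewrite /c natrD mulrDl; try (by []); exact: addrC.
have hre : \sum_s w s e * G s = \sum_s w (phi s) e * G s.
  rewrite (reindex_inj (inv_inj phiK)); apply: eq_bigr => s _; by rewrite phiG.
have H2 : \sum_s w s e * G s + \sum_s w s e * G s = c * \sum_s G s.
  rewrite {2}hre -big_split mulr_sumr; apply: eq_bigr => s _.
  by rewrite /= -mulrDl hphie.
have HG : \sum_s G s = (2 ^ m)%:R * (c / 2) ^+ #|E'| := IHE.
rewrite HG in H2; move: H2.
set X := \sum_s _; set P := (c / 2) ^+ _; move=> H2.
exact: half_eq H2.
Qed.
End Forest.

Lemma prod_recr (R : realType) (m v : nat) :
  \prod_(j < v.+1) ((m - j)%N)%:R = (\prod_(j < v) ((m - j)%N)%:R) * ((m - v)%N)%:R :> R.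
Proof. by rewrite big_ord_recr. Qed.

Section Compare.
Variable R : realType.
Variable T : finType.
Variable k : nat.
Hypothesis hT : #|T| = (k + k)%N.
Implicit Types s : {ffun T -> bool}.

Definition balT := [set s : {ffun T -> bool} | #|[set i | s i]| == k].
Definition dep (V : {set T}) (F : {ffun T -> bool} -> R) :=
  forall s s', (forall i, i \in V -> s i = s' i) -> F s = F s'.
Definition upd s (x : T) (b : bool) : {ffun T -> bool} :=
  [ffun i => if i == x then b else s i].

Lemma allG (F : {ffun T -> bool} -> R) x :
  \sum_s (F (upd s x true) + F (upd s x false)) = 2 * \sum_s F s.
Proof.
pose fx s : {ffun T -> bool} := [ffun i => if i == x then ~~ s i else s i].
have fxK : involutive fx.
  by move=> s; apply/ffunP => i; rewrite !ffunE; case: (i == x) => //; rewrite negbK.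
have pw : forall s, F (upd s x true) + F (upd s x false) = F s + F (fx s).
  move=> s; have sxE : s x = s x by [].
  have e1 : upd s x (s x) = s.
    by apply/ffunP => i; rewrite ffunE; case: eqP => // ->.
  have e2 : upd s x (~~ s x) = fx s.
    by apply/ffunP => i; rewrite !ffunE; case: eqP => // ->.
  case: (boolP (s x)) => hx.
    by rewrite hx /= in e1 e2; rewrite e1 e2.
  by rewrite (negbTE hx) /= in e1 e2; rewrite e1 e2 addrC.
rewrite (eq_bigr _ (fun s _ => pw s)) big_split /=.
rewrite [X in _ + X = _](reindex_inj (inv_inj fxK)) /=.
under [X in _ + X = _]eq_bigr do rewrite fxK.
by apply: dbl.
Qed.

Lemma swapstep (F : {ffun T -> bool} -> R) (V : {set T}) x :
  x \in V -> dep V F -> (forall s, 0 <= F s) ->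
  (#|T| - #|V :\ x|)%:R * \sum_(s in balT) F s <=
  k%:R * \sum_(s in balT) (F (upd s x true) + F (upd s x false)).
Proof.
move=> xV dF F0; set W := V :\ x.
pose sw (y : T) s : {ffun T -> bool} := [ffun i => s (tperm x y i)].
have swK : forall y, involutive (sw y).
  by move=> y s; apply/ffunP => i; rewrite !ffunE tpermK.
have swB : forall y s, (sw y s \in balT) = (s \in balT).
  move=> y s; rewrite !inE.
  have -> : [set i | sw y s i] = tperm x y @^-1: [set i | s i].
    by apply/setP => i; rewrite !inE ffunE.
  by rewrite card_preimset //; apply: perm_inj.
have h1 : forall y, \sum_(s in balT) F (sw y s) = \sum_(s in balT) F s.
  move=> y; rewrite [RHS](reindex_inj (inv_inj (swK y))) /=.
  by apply: eq_big => s //; rewrite swB.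
have cW : #|~: W| = (#|T| - #|W|)%N by rewrite -(cardsC W) addKn.
have -> : (#|T| - #|W|)%:R * \sum_(s in balT) F s =
          \sum_(y in ~: W) \sum_(s in balT) F (sw y s).
  by rewrite (eq_bigr _ (fun y _ => h1 y)) sumr_const cW mulr_natl.
rewrite exchange_big /= mulr_sumr; apply: ler_sum => s sB.
have e : forall y, y \in ~: W -> F (sw y s) = F (upd s x (s y)).
  move=> y; rewrite inE => yW; apply: dF => i iV; rewrite !ffunE.
  have [->|ix] := eqVneq i x; first by rewrite tpermL.
  rewrite tpermD //; first by rewrite eq_sym.
  apply: contraNneq yW => ->; by rewrite /W in_setD1 ix iV.
rewrite (eq_bigr _ e) (bigID (fun y => s y)) /=.
have ht : \sum_(y in ~: W | s y) F (upd s x (s y)) =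
          #|[set y in ~: W | s y]|%:R * F (upd s x true).
  rewrite mulr_natl -sumr_const; apply: eq_big => y; first by rewrite inE.
  by rewrite andbC => /andP[-> _].
have hf : \sum_(y in ~: W | ~~ s y) F (upd s x (s y)) =
          #|[set y in ~: W | ~~ s y]|%:R * F (upd s x false).
  rewrite mulr_natl -sumr_const; apply: eq_big => y; first by rewrite inE.
  by rewrite andbC => /andP[/negbTE -> _].
rewrite ht hf mulrDr; apply: lerD; apply: ler_wpM2r => //; rewrite ler_nat.
  move: sB; rewrite inE => /eqP <-; apply: subset_leq_card.
  by apply/fintype.subsetP => y; rewrite !inE => /andP[_ ->].
have ck : #|[set y | ~~ s y]| = k.
  move: sB; rewrite inE => /eqP hs.
  have -> : [set y | ~~ s y] = ~: [set y | s y] by apply/setP => y; rewrite !inE.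
  by rewrite cardsCs finset.setCK hT hs addnK.
rewrite -ck; apply: subset_leq_card.
by apply/fintype.subsetP => y; rewrite !inE => /andP[_ ->].
Qed.

Lemma compare : forall v (V : {set T}) (F : {ffun T -> bool} -> R),
  #|V| = v -> dep V F -> (forall s, 0 <= F s) ->
  (\sum_(s in balT) F s) * (2 ^ #|T|)%:R * \prod_(j < v) ((#|T| - j)%N)%:R
   <= #|balT|%:R * (#|T|%:R) ^+ v * \sum_s F s.
Proof.
elim=> [|v IH] V F hV dF F0.
  move/cards0_eq: hV => V0.
  pose s0 : {ffun T -> bool} := [ffun=> false].
  have hc : forall s, F s = F s0 by move=> s; apply: dF => i; rewrite V0 inE.
  rewrite (eq_bigr _ (fun s _ => hc s)) [X in _ <= _ * X](eq_bigr _ (fun s _ => hc s)).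
  rewrite !sumr_const card_ffun card_bool big_ord0 expr0.
  rewrite -(mulr_natl (F s0) #|balT|) -(mulr_natl (F s0) (2 ^ #|T|)).
  exact: base_le.
have : (0 < #|V|)%N by rewrite hV.
case/card_gt0P => x xV.
set W := V :\ x.
have hW : #|W| = v by move: hV; rewrite (cardsD1 x V) xV add1n => -[].
pose G s := F (upd s x true) + F (upd s x false).
have dG : dep W G.
  move=> s s' h; rewrite /G; congr (_ + _); apply: dF => i iV; rewrite !ffunE;
  (case: eqP => // /eqP ix; apply: h; by rewrite /W in_setD1 ix iV).
have G0 : forall s, 0 <= G s by move=> s; apply: addr_ge0.
have IHG := IH W G hW dG G0.
have SW := @swapstep F V x xV dF F0.
rewrite -/W hW in SW.
have AG : \sum_s G s = 2 * \sum_s F s := allG F x.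
rewrite AG in IHG.
rewrite prod_recr exprSr.
set a := \sum_(s in balT) F s in SW *.
set b := \sum_(s in balT) G s in IHG.
have eb : \sum_(s in balT) (F (upd s x true) + F (upd s x false)) = b by [].
rewrite eb in SW.
move: SW IHG.
set q := (2 ^ #|T|)%:R; set p := \prod_(j < v) _; set r := ((#|T| - v)%N)%:R.
set M := _ ^+ v; set B := #|balT|%:R; set sF := \sum_s F s.
move=> SW IHG.
have qp0 : 0 <= q * p by rewrite mulr_ge0 // prodr_ge0.
rewrite hT natrD; exact: step_le qp0 (ler0n _ _) SW IHG.
Qed.
End Compare.

Lemma prodlb (R : realType) (m : nat) : forall v, (v <= m)%N ->
  (m%:R : R) ^+ v * (m%:R - (v ^ 2)%:R) <= m%:R * \prod_(j < v) ((m - j)%N)%:R.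
Proof.
elim=> [|v IH] hv.
  by rewrite big_ord0 expr0 mul1r mulr1 subr0.
have IH' := IH (ltnW hv).
rewrite big_ord_recr /= natrB ?(ltnW hv) //.
move: IH'; set a : R := m%:R; set P := \prod_(j < v) _.
rewrite !natrX -natr1; set b : R := v%:R => IH'.
have M0 : 0 <= a ^+ v by rewrite exprn_ge0 // ler0n.
have ab : 0 <= a - b by rewrite subr_ge0 ler_nat ltnW.
have b0 : 0 <= b by rewrite ler0n.
have a0 : 0 <= a by rewrite ler0n.
have h1 := ler_wpM2r ab IH'.
apply: le_trans _ (_ : a * P * (a - b) <= _); last by rewrite mulrA.
apply: le_trans _ h1.
rewrite exprSr.
have : 0 <= a ^+ v * (a * b + b ^+ 3 + a).
  by rewrite mulr_ge0 // !addr_ge0 // ?mulr_ge0 // exprn_ge0.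
set M := a ^+ v => H; nra.
Qed.

Lemma lnbound (R : realType) (C x : R) : 0 <= C -> 1 <= x -> (64 * C ^+ 2) ^+ 2 <= x ->
  4 * C ^+ 2 * (ln x) ^+ 2 <= x.
Proof.
move=> C0 x1 hx.
have x0 : 0 < x by lra.
set t := Num.sqrt x; set s := Num.sqrt t.
have t0 : 0 < t by rewrite sqrtr_gt0.
have s0 : 0 < s by rewrite sqrtr_gt0.
have ht : t ^+ 2 = x by rewrite sqr_sqrtr // ltW.
have hs : s ^+ 2 = t by rewrite sqr_sqrtr // ltW.
have xs : x = s ^+ 4 by rewrite -ht -hs -exprM.
have lnx : ln x = ln s *+ 4 by rewrite xs lnXn.
have lns0 : 0 <= ln s.
  have := ln_ge0 x1; rewrite lnx; rewrite pmulrn_lge0 //.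
have lns : ln s <= s.
  have h := @le_ln1Dx R (s - 1).
  have e : 1 + (s - 1) = s by ring.
  rewrite e in h; apply: le_trans (h _) _; lra.
have tA : 64 * C ^+ 2 <= t.
  have A0 : 0 <= 64 * C ^+ 2 by rewrite mulr_ge0 // exprn_ge0.
  rewrite -ht in hx; move: hx A0 (ltW t0); set A := 64 * C ^+ 2; nra.
rewrite lnx -ht -hs.
move: tA lns0 lns; rewrite -hs; set L := ln s; set C2 := C ^+ 2 => tA L0 Ls.
have C20 : 0 <= C2 by rewrite exprn_ge0.
have S0 : 0 <= s ^+ 2 by rewrite exprn_ge0 // ltW.
have hL2 : L ^+ 2 <= s ^+ 2 by rewrite ler_pXn2r // ?nnegrE // ltW.
have h3 : 64 * C2 * L ^+ 2 <= 64 * C2 * s ^+ 2.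
  by rewrite ler_wpM2l // mulr_ge0.
have h4 : 64 * C2 * s ^+ 2 <= s ^+ 2 * s ^+ 2 by rewrite ler_wpM2r.
apply: le_trans _ h4; apply: le_trans _ h3.
rewrite le_eqVlt; apply/orP; left; apply/eqP; rewrite -mulr_natl; ring.
Qed.

Lemma final_ineq (R : realFieldType) (S Bc Y a b n z q P M : R) :
 0 < n -> a = 2 * n -> 0 <= b -> b ^+ 2 <= n -> b ^+ 2 <= z -> 0 < q -> 0 < M ->
 0 <= Y -> 0 <= S -> 0 < Bc ->
 S * q * P <= Bc * M * (q * Y) -> M * (a - b ^+ 2) <= a * P ->
 S <= Bc * (Y * (1 + z / n)).
Proof.
have eqle : forall x y : R, x = y -> x <= y by move=> x y ->.
move=> n0 an b0 bn bz q0 M0 Y0 S0 B0 cmp pl.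
have h1 : S * P <= Bc * M * Y.
  rewrite -(ler_pM2r q0).
  apply: le_trans (_ : _ <= S * q * P) _; first by apply: eqle; ring.
  apply: le_trans cmp _; by apply: eqle; ring.
have a0 : 0 <= a by rewrite an; lra.
have h2 := ler_wpM2l S0 pl.
have h3 := ler_wpM2l a0 h1.
have h4 : S * (a - b ^+ 2) <= a * Bc * Y.
  rewrite -(ler_pM2l M0).
  apply: le_trans (_ : _ <= S * (M * (a - b ^+ 2))) _; first by apply: eqle; ring.
  apply: le_trans h2 _.
  apply: le_trans (_ : a * (Bc * M * Y) <= _); last first.
    by apply: eqle; ring.
  apply: le_trans _ h3.
  by apply: eqle; ring.
set w := z / n.
have zw : z = w * n by rewrite /w mulfVK // gt_eqF.
have w0 : 0 <= w by rewrite /w divr_ge0 //; [exact: le_trans (sqr_ge0 b) bz | exact: ltW].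
have BY0 : 0 <= Bc * Y by rewrite mulr_ge0 // ltW.
have h5 : a <= (1 + w) * (a - b ^+ 2).
  have := mulr_ge0 w0 (_ : 0 <= n - b ^+ 2); rewrite subr_ge0 => /(_ bn) h.
  rewrite an; rewrite zw in bz; nra.
have ab : 0 < a - b ^+ 2 by rewrite an; lra.
rewrite -(ler_pM2r ab); apply: le_trans h4 _.
have := ler_wpM2l BY0 h5.
move=> h; apply: le_trans (_ : _ <= Bc * Y * a) _.
  by apply: eqle; ring.
apply: le_trans h _.
by apply: eqle; ring.
Qed.


Lemma sq_le (R : realFieldType) (b t : R) : 0 <= b -> b <= t -> b ^+ 2 <= t ^+ 2.
Proof. move=> b0 bt; nra. Qed.

Lemma c4_ge0 (R : realFieldType) (C : R) : 0 <= 4 * C ^+ 2.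
Proof. have := sqr_ge0 C; lra. Qed.

Theorem lemma6p13 (R : realType) (d1 d2 : nat) (C : R) :
  (0 < d1)%N -> (0 < d2)%N -> 0 < C ->
  exists K : R, exists N : nat, forall n : nat, (N <= n)%N ->
    forall T : {set {set 'I_(2 * n)}}, is_tree T ->
      #|T|%:R <= C * ln (n%:R : R) ->
      tree_expect R d1 d2 T <=
        ((d1 + d2)%:R / (2 * n)%:R) ^+ #|T| * (1 + K * (ln (n%:R : R)) ^+ 2 / n%:R).
Proof.
move=> d10 d20 C0.
have x0 : 0 <= (64 * C ^+ 2) ^+ 2 :> R.
  by apply: exprn_ge0; apply: mulr_ge0; [lra | exact: sqr_ge0].
exists (4 * C ^+ 2), (maxn 1 (Num.Def.archi_bound ((64 * C ^+ 2) ^+ 2))).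
move=> n; rewrite geq_max => /andP[n1 nb] T [h2 [_ hf]] hTC.
have nR : 0 < (n%:R : R) by rewrite ltr0n.
have n1R : 1 <= (n%:R : R) by rewrite ler1n.
have hbig : (64 * C ^+ 2) ^+ 2 <= (n%:R : R).
  apply: le_trans (ltW (archi_boundP x0)) _; by rewrite ler_nat.
have hln := @lnbound R C n%:R (ltW C0) n1R hbig.
have L0 : 0 <= ln (n%:R : R) by apply: ln_ge0.
set L := ln (n%:R : R) in hTC hln L0 *.
pose F := fun s : {ffun 'I_(2 * n) -> bool} =>
  \prod_(e in T) ((d_edge d1 d2 s e)%:R / n%:R : R).
set V := verts T.
have dF : @dep R _ V F.
  move=> s s' h; apply: eq_bigr => e eT; rewrite /d_edge.
  have eV : forall u, u \in e -> s u = s' u.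
    move=> u ue; apply: h; rewrite /V /verts /cover; apply/finset.bigcupP; by exists e.
  have -> : [forall u in e, forall w in e, s u == s w] =
            [forall u in e, forall w in e, s' u == s' w].
    apply: eq_forallb_in => u ue; apply: eq_forallb_in => w we; by rewrite !eV.
  by [].
have F0 : forall s, 0 <= F s.
  by move=> s; apply: prodr_ge0 => e _; rewrite divr_ge0 // ler0n.
have hcard : #|'I_(2 * n)| = (n + n)%N by rewrite card_ord mul2n addnn.
have cmp := @compare R _ n hcard #|V| V F erefl dF F0.
have fs : \sum_s F s = _ := @forest_sum R (2 * n) d1 d2 n T h2 hf.
rewrite fs card_ord in cmp.
have pl := @prodlb R _ _ (max_card V).
rewrite card_ord natrX in pl.
have vk : (#|V| <= #|T| * 2)%N.
  apply: leq_trans (leq_card_cover T).1 _.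
  rewrite -sum_nat_const; apply: leq_sum => e eT; by rewrite h2.
have -> : tree_expect R d1 d2 T =
   (#|balT 'I_(2 * n) n|%:R)^-1 * \sum_(s in balT 'I_(2 * n) n) F s by [].
have base : (d1 + d2)%:R / (2 * n)%:R = (d1 + d2)%:R / n%:R / 2 :> R.
  by rewrite natrM invfM mulrA mulrAC.
rewrite base.
move: cmp; set Y := (_ / 2) ^+ #|T|; move=> cmp.
have Y0 : 0 <= Y by rewrite exprn_ge0 // !divr_ge0 // ler0n.
have [B0|Bpos] := eqVneq #|balT 'I_(2 * n) n| 0%N.
  rewrite B0 invr0 mul0r; apply: mulr_ge0 => //.
  apply: addr_ge0 => //; apply: divr_ge0; last exact: ltW.
  by apply: mulr_ge0; [exact: c4_ge0 | exact: sqr_ge0].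
rewrite ler_pdivrMl; last by rewrite ltr0n lt0n.
have b0 : 0 <= (#|V|%:R : R) by rewrite ler0n.
have bt : (#|V|%:R : R) <= 2 * (C * L).
  apply: le_trans (_ : _ <= ((#|T| * 2)%N)%:R :> R) _; first by rewrite ler_nat.
  by rewrite natrM mulrC ler_wpM2l.
have bz : (#|V|%:R : R) ^+ 2 <= 4 * C ^+ 2 * L ^+ 2.
  apply: le_trans (@sq_le _ _ _ b0 bt) _; rewrite le_eqVlt; apply/orP; left; apply/eqP; ring.
apply: (@final_ineq R _ _ _ ((2 * n)%:R) _ _ _ ((2 ^ (2 * n))%:R)
          (\prod_(j < #|V|) ((2 * n - j)%N)%:R)
          ((2 * n)%:R ^+ #|V|) nR _ b0 _ bz _ _ Y0 _ _ cmp pl).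
- by rewrite natrM.
- exact: le_trans bz hln.
- by rewrite ltr0n expn_gt0.
- by rewrite exprn_gt0 // ltr0n muln_gt0.
- by apply: sumr_ge0.
- by rewrite ltr0n lt0n.
Qed.
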